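(* Let $n\ge2$, let $X\subset\mathbb{R}^n$ be finite with the Euclidean metric $d$, let $k\in\mathbb{N}$, $Y\subset X$ and $\epsilon>0$. Suppose $p\in C$ for some $C\in\mathcal{D}^*(Y,\epsilon)$ and $x\in Y\setminus C$. Then there exists $a\in(\partial C)^{\mathfrak{n}}_C\subset J(Y,\epsilon)$ such that $\rho^Y(a,x)\le\rho^Y(p,x)$.
   Context: DBSCAN$^*$: for $Y\subset X$, $\mathcal{C}(Y,\epsilon)=\{p\in Y:|\{y\in Y:d(p,y)\le\epsilon\}|>k\}$, $\mathcal{N}(Y,\epsilon)=Y\setminus\mathcal{C}(Y,\epsilon)$, and $\mathcal{D}^*(Y,\epsilon)$ is the set of vertex sets of the connected components of the graph with vertex set $\mathcal{C}(Y,\epsilon)$ and an edge between distinct $p,q$ whenever $d(p,q)\le\epsilon$. For $p\in Y$, $\operatorname{core}^Y_k(p)$ is the distance from $p$ to a $k$-th nearest neighbour of $p$ in $Y$ (the $k$-th smallest value of $d(p,y)$, $y\in Y\setminus\{p\}$, with multiplicity), and $\rho^Y(p,q)=\max\{\operatorname{core}^Y_k(p),\operatorname{core}^Y_k(q),d(p,q)\}$ for $p\neq q$, $\rho^Y(p,p)=0$. Cubes: $\mathcal{Q}=\mathcal{Q}(\epsilon)$ is the collection of closed cubes $\{x\in\mathbb{R}^n: j_i\frac{\epsilon}{2\sqrt n}\le x_i\le (j_i+1)\frac{\epsilon}{2\sqrt n}\}$, $j\in\mathbb{Z}^n$; $S^m=\{x:\max_i|x_i-s_i|\le m\frac{\epsilon}{2\sqrt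 n}\text{ for some }s\in S\}$; $\mathcal{I}(B)=\{S\in\mathcal{Q}:S\cap B\neq\emptyset\}$. For $A\subset X$, $S\in\mathcal{I}(A)$ is an interior cube of $A$ if $S^1\cap X\subset A$ and every $T\in\mathcal{Q}$ with $T\subset S^1$ lies in $\mathcal{I}(A)$, otherwise a boundary cube; $\partial A$ is the union of boundary cubes. For $Z\subset\mathbb{R}^n$ and integer $N\ge0$, $Z^N=\bigcup_{S\in\mathcal{I}(Z)}S^N$ and $Z^N_C=Z^N\cap C$. $\mathfrak{n}$ is the smallest integer with $\mathfrak{n}\ge\sqrt n-1$. $J(Y,\epsilon)=\bigcup_{C\in\mathcal{D}^*(Y,\epsilon)}(\partial C)^{\mathfrak{n}}_C\cup\mathcal{N}(Y,\epsilon)$. *)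

(* Defs.v *)
From HB Require Import structures.
From mathcomp Require Import all_boot all_order all_algebra finmap.
From mathcomp Require Import all_classical all_reals.
From Stdlib Require Import Relation_Operators.
Set Implicit Arguments. Unset Strict Implicit. Unset Printing Implicit Defensive.
Import Order.TTheory GRing.Theory Num.Theory.
Local Open Scope ring_scope.
Local Open Scope classical_set_scope.

Section Dbscan.
Variables (R : realType) (n : nat).
Notation pt := 'rV[R]_n.

Definition dist (p q : pt) : R := Num.sqrt (\sum_(i < n) (p 0 i - q 0 i) ^+ 2).

Definition core_pt (Y : {fset pt}) (k : nat) (eps : R) (p : pt) : Prop :=
  p \in Y /\ (k < #|` [fset y in Y | (dist p y <= eps)%R]%fset|)%N.

Definition noise_pt (Y : {fset pt}) (k : nat) (eps : R) (p : pt) : Prop :=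
  p \in Y /\ ~ core_pt Y k eps p.

Definition core_edge (Y : {fset pt}) (k : nat) (eps : R) (u v : pt) : Prop :=
  core_pt Y k eps u /\ core_pt Y k eps v /\ dist u v <= eps.

Definition is_component (Y : {fset pt}) (k : nat) (eps : R) (C : set pt) : Prop :=
  exists c, core_pt Y k eps c /\
    C = [set q | clos_refl_trans pt (core_edge Y k eps) c q].

(* core^Y_k(p): k-th smallest value of d(p,y), y in Y \ {p}, with multiplicity
   (convention: 0 when k = 0) *)
Definition core_dist (Y : {fset pt}) (k : nat) (p : pt) : R :=
  if k is k'.+1 then nth 0 (sort <=%R [seq dist p y | y <- (Y `\ p)%fset]) k'
  else 0.

Definition rho (Y : {fset pt}) (k : nat) (p q : pt) : R :=
  if p == q then 0
  else Num.max (core_dist Y k p) (Num.max (core_dist Y k q) (dist p q)).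

Definition side (eps : R) : R := eps / (2 * Num.sqrt n%:R).

Definition cube (eps : R) (j : 'I_n -> int) : set pt :=
  [set x | forall i, (j i)%:~R * side eps <= x 0 i /\ x 0 i <= (j i + 1)%:~R * side eps].

Definition is_cube (eps : R) (S : set pt) : Prop := exists j, S = cube eps j.

Definition thick (eps : R) (S : set pt) (m : nat) : set pt :=
  [set x | exists s, S s /\ forall i, `|x 0 i - s 0 i| <= m%:R * side eps].

Definition Icubes (eps : R) (B : set pt) : set (set pt) :=
  [set S | is_cube eps S /\ S `&` B !=set0].

Definition interior_cube (X : {fset pt}) (eps : R) (A : set pt) (S : set pt) : Prop :=
  Icubes eps A S /\
  thick eps S 1 `&` [set x | x \in X] `<=` A /\
  (forall T, is_cube eps T -> T `<=` thick eps S 1 -> Icubes eps A T).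

Definition boundary_cube (X : {fset pt}) (eps : R) (A : set pt) (S : set pt) : Prop :=
  Icubes eps A S /\ ~ interior_cube X eps A S.

Definition boundary (X : {fset pt}) (eps : R) (A : set pt) : set pt :=
  [set x | exists S, boundary_cube X eps A S /\ S x].

Definition Zthick (eps : R) (Z : set pt) (N : nat) : set pt :=
  [set x | exists S, Icubes eps Z S /\ thick eps S N x].

Definition Zthick_in (eps : R) (Z : set pt) (N : nat) (C : set pt) : set pt :=
  Zthick eps Z N `&` C.

(* frak n : smallest integer >= sqrt n - 1 (nonnegative for n >= 1) *)
Definition frakn : nat := `|Num.ceil (Num.sqrt (n%:R : R) - 1)|%N.

Definition Jset (X Y : {fset pt}) (k : nat) (eps : R) : set pt :=
  [set a | exists C, is_component Y k eps C /\
                     Zthick_in eps (boundary X eps C) frakn C a]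
  `|` [set a | noise_pt Y k eps a].

End Dbscan.

(* Main.v *)
Require Import Defs.
From HB Require Import structures.
From mathcomp Require Import all_boot all_order all_algebra finmap.
From mathcomp Require Import all_classical all_reals.
From mathcomp Require Import ring lra zify.
From Stdlib Require Import Relation_Operators.
Import Order.TTheory GRing.Theory Num.Theory.
Local Open Scope ring_scope.

Section Metric.
Variables (R : realType) (n : nat).
Implicit Types (p q a x y : 'rV[R]_n).

Lemma sumsq_ge0 (f : 'I_n -> R) : 0 <= \sum_i f i ^+ 2.
Proof. by apply: sumr_ge0 => i _; rewrite sqr_ge0. Qed.

Lemma dist_ge0 p q : 0 <= dist p q.
Proof. exact: sqrtr_ge0. Qed.

Lemma distxx p : dist p p = 0.
Proof. by rewrite /dist big1 ?sqrtr0 // => i _; rewrite subrr expr0n. Qed.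

Lemma distC p q : dist p q = dist q p.
Proof. by rewrite /dist; congr Num.sqrt; apply: eq_bigr => i _; rewrite -sqrrN opprB. Qed.

Lemma coord_le_dist p q i : `|p 0 i - q 0 i| <= dist p q.
Proof.
rewrite -sqrtr_sqr /dist ler_sqrt ?sumsq_ge0 //.
rewrite (bigD1 i) //= lerDl; apply: sumr_ge0 => j _; exact: sqr_ge0.
Qed.

Lemma dist_le_box p q c : 0 <= c -> (forall i, `|p 0 i - q 0 i| <= c) ->
  dist p q <= Num.sqrt n%:R * c.
Proof.
move=> c0 H; rewrite -(ger0_norm c0) -sqrtr_sqr -sqrtrM ?ler0n //.
rewrite /dist ler_sqrt; last by rewrite mulr_ge0 ?ler0n ?sqr_ge0.
apply: le_trans (_ : \sum_(i < n) c ^+ 2 <= _).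
  apply: ler_sum => i _; rewrite -real_normK ?num_real //.
  by rewrite ler_sqr ?nnegrE ?normr_ge0 // (ger0_norm c0) ?H.
by rewrite sumr_const card_ord mulr_natl.
Qed.

Lemma cs_aux (u v : 'I_n -> R) :
  \sum_i u i * v i <= Num.sqrt (\sum_i u i ^+ 2) * Num.sqrt (\sum_i v i ^+ 2).
Proof.
set U := \sum_i u i ^+ 2; set V := \sum_i v i ^+ 2.
set A := Num.sqrt U; set B := Num.sqrt V.
have U0 : 0 <= U by apply: sumsq_ge0.
have V0 : 0 <= V by apply: sumsq_ge0.
have hA : A ^+ 2 = U by rewrite sqr_sqrtr.
have hB : B ^+ 2 = V by rewrite sqr_sqrtr.
have A0 : 0 <= A by apply: sqrtr_ge0.
have B0 : 0 <= B by apply: sqrtr_ge0.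
have E : \sum_i (B * u i - A * v i) ^+ 2 =
   B ^+ 2 * U - 2 * A * B * \sum_i u i * v i + A ^+ 2 * V.
  rewrite /U /V !mulr_sumr -sumrB -big_split /=; apply: eq_bigr => i _; ring.
have E0 : 0 <= \sum_i (B * u i - A * v i) ^+ 2 by apply: sumsq_ge0.
have [Az|Apos] := eqVneq A 0.
  have U00 : U = 0 by rewrite -hA Az expr0n.
  have ui : forall i, u i = 0.
    move=> i; apply/eqP; rewrite -sqrf_eq0; apply/eqP.
    move: U00; rewrite /U => /eqP; rewrite psumr_eq0; last by move=> j _; rewrite sqr_ge0.
    by move/allP => /(_ i); rewrite mem_index_enum => /(_ isT) /eqP.
  by rewrite big1 ?mulr_ge0 // => i _; rewrite ui mul0r.
have [Bz|Bpos] := eqVneq B 0.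
  have V00 : V = 0 by rewrite -hB Bz expr0n.
  have vi : forall i, v i = 0.
    move=> i; apply/eqP; rewrite -sqrf_eq0; apply/eqP.
    move: V00; rewrite /V => /eqP; rewrite psumr_eq0; last by move=> j _; rewrite sqr_ge0.
    by move/allP => /(_ i); rewrite mem_index_enum => /(_ isT) /eqP.
  by rewrite big1 ?mulr_ge0 // => i _; rewrite vi mulr0.
have AB : 0 < A * B by rewrite mulr_gt0 // lt_neqAle eq_sym ?Apos ?Bpos.
rewrite E -hA -hB in E0.
set S := \sum_i u i * v i in E0 *.
have : 2 * (A * B) * S <= 2 * (A * B) * (A * B) by nra.
move=> h; have h2 : 0 < 2 * (A * B) by rewrite mulr_gt0. 
by rewrite ler_pM2l in h.
Qed.

Lemma dist_triangle a y x : dist a x <= dist a y + dist y x.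
Proof.
have h0 : 0 <= dist a y + dist y x by rewrite addr_ge0 ?dist_ge0.
rewrite -(ger0_norm h0) -sqrtr_sqr /dist ler_sqrt ?sqr_ge0 //.
rewrite sqrrD !sqr_sqrtr ?sumsq_ge0 //.
have := cs_aux (fun i => a 0 i - y 0 i) (fun i => y 0 i - x 0 i) => cs.
have E : \sum_i (a 0 i - x 0 i) ^+ 2 = \sum_i (a 0 i - y 0 i) ^+ 2 +
   2 * \sum_i (a 0 i - y 0 i) * (y 0 i - x 0 i) + \sum_i (y 0 i - x 0 i) ^+ 2.
  rewrite mulr_sumr -!big_split /=; apply: eq_bigr => i _; ring.
rewrite E; set P := \sum_i (a 0 i - y 0 i) * (y 0 i - x 0 i) in cs *.
rewrite mulr2n mulrDl mul1r; lra.
Qed.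

Definition seg p x (l : R) : 'rV[R]_n := \row_i (p 0 i + l * (x 0 i - p 0 i)).

Lemma dist_seg_l p x l : 0 <= l -> dist p (seg p x l) = l * dist p x.
Proof.
move=> l0; rewrite /dist -[in RHS](ger0_norm l0) -sqrtr_sqr -sqrtrM ?sqr_ge0 //.
congr Num.sqrt; rewrite mulr_sumr; apply: eq_bigr => i _; rewrite mxE; ring.
Qed.

Lemma dist_seg_r p x l : l <= 1 -> dist (seg p x l) x = (1 - l) * dist p x.
Proof.
move=> l1; have l0 : 0 <= 1 - l by lra.
rewrite /dist -[in RHS](ger0_norm l0) -sqrtr_sqr -sqrtrM ?sqr_ge0 //.
congr Num.sqrt; rewrite mulr_sumr; apply: eq_bigr => i _; rewrite mxE; ring.
Qed.

End Metric.
Arguments seg {R n}.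
Arguments coord_le_dist {R n}.
Arguments distC {R n}.
Arguments dist_le_box {R n}.
Arguments dist_triangle {R n}.
Arguments dist_seg_l {R n}.
Arguments dist_seg_r {R n}.

Section Core.
Variables (R : realType) (n : nat).
Implicit Types (p q a x y : 'rV[R]_n) (Y : {fset 'rV[R]_n}).

Lemma card_sep Y (P : pred 'rV[R]_n) : #|` [fset y in Y | P y]%fset| = count P Y.
Proof.
have -> : [fset y in Y | P y]%fset = [fset y in [seq y <- enum_fset Y | P y]]%fset.
  by apply/fsetP => y; rewrite !inE mem_filter andbC.
by rewrite card_fseq undup_id ?size_filter // filter_uniq // fset_uniq.
Qed.

Lemma card_ball Y a (eps : R) : 0 <= eps -> a \in Y ->
  #|` [fset y in Y | dist a y <= eps]%fset| =
  (count (fun y => dist a y <= eps) (enum_fset (Y `\ a)%fset)).+1.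
Proof.
move=> e0 aY.
rewrite (cardfsD1 a) !inE aY /= distxx e0 add1n -card_sep; congr (_.+1).
congr (size (enum_fset _)); apply/fsetP => y; rewrite !inE; by case: (y == a).
Qed.

Lemma count_sortd Y a (eps : R) :
  count (fun d => d <= eps) (sort <=%R [seq dist a y | y <- enum_fset (Y `\ a)%fset]) =
  count (fun y => dist a y <= eps) (enum_fset (Y `\ a)%fset).
Proof.
have hp : perm_eq (sort <=%R [seq dist a y | y <- enum_fset (Y `\ a)%fset]) [seq dist a y | y <- enum_fset (Y `\ a)%fset] by rewrite perm_sort.
by rewrite (permP hp) count_map.
Qed.

Lemma core_le Y k (eps : R) a : 0 <= eps -> core_pt Y k eps a -> core_dist Y k a <= eps.
Proof.
move=> e0 [aY hk]; case: k hk => [|k] hk /=; first by [].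
apply: nth_count_le; first by apply: sort_sorted; exact: le_total.
rewrite (count_sortd Y a eps).
by rewrite card_ball // in hk.
Qed.

Lemma noise_gt Y k (eps : R) x : 0 <= eps -> x \in Y -> ~ core_pt Y k eps x ->
  (k < #|` Y|)%N -> eps < core_dist Y k x.
Proof.
move=> e0 xY nc kY; have hc := card_ball Y x eps e0 xY.
case: k nc kY => [|k] nc kY.
  by exfalso; apply: nc; split => //; rewrite hc.
have hk : (count (fun y => (dist x y <= eps)%R) (enum_fset (Y `\ x)%fset) <= k)%N.
  rewrite leqNgt; apply/negP => h; apply: nc; split => //; by rewrite hc.
rewrite /core_dist; apply: nth_count_gt; first by apply: sort_sorted; exact: le_total.
rewrite (count_sortd Y x eps) hk /= size_sort size_map.
have := cardfsD1 x Y; rewrite xY add1n => h; rewrite h in kY; exact: kY.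
Qed.

End Core.

Section Cubes.
Variables (R : realType) (n : nat).
Local Open Scope classical_set_scope.
Implicit Types (p q a x y z : 'rV[R]_n).

Lemma side_gt0 (eps : R) : 0 < eps -> (0 < n)%N -> 0 < side n eps.
Proof.
move=> e0 n0; rewrite /side divr_gt0 // mulr_gt0 // sqrtr_gt0 ltr0n //.
Qed.

Lemma side_sqrt (eps : R) : (0 < n)%N -> side n eps * Num.sqrt n%:R = eps / 2.
Proof.
move=> n0; have h : 0 < Num.sqrt (n%:R : R) by rewrite sqrtr_gt0 ltr0n.
rewrite /side; field; by rewrite gt_eqF.
Qed.

Lemma floor_diff (t t' c : R) : `|t' - t| <= c ->
  ((Num.floor t' - Num.floor t)%:~R : R) < c + 1.
Proof.
move=> /ler_normlP [h1 h2].
have := floor_le t'; have := floorD1_gt t; rewrite intrB intrD; lra.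
Qed.

Definition idx (eps : R) y : 'I_n -> int := fun i => Num.floor (y 0 i / side n eps).

Lemma in_cube_idx (eps : R) y : 0 < side n eps -> cube eps (idx eps y) y.
Proof.
move=> s0 i; split.
  by rewrite -ler_pdivlMr // floor_le.
by apply: ltW; rewrite -ltr_pdivrMr // floorD1_gt.
Qed.

Lemma idx_close (eps c : R) y y' : 0 < side n eps ->
  (forall i, `|y' 0 i - y 0 i| <= c * side n eps) ->
  forall i, ((idx eps y' i - idx eps y i)%:~R : R) < c + 1 /\
            ((idx eps y i - idx eps y' i)%:~R : R) < c + 1.
Proof.
move=> s0 H i; split; apply: floor_diff.
  by rewrite -mulrBl normrM normfV (gtr0_norm s0) ler_pdivrMr.
by rewrite distrC -mulrBl normrM normfV (gtr0_norm s0) ler_pdivrMr.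
Qed.

Lemma clampP (s t : R) (J J' : int) (m : nat) : 0 < s ->
  J'%:~R * s <= t <= (J' + 1)%:~R * s -> `|J' - J| <= m%:Z ->
  let q := if t < J%:~R * s then J%:~R * s else
           if (J + 1)%:~R * s < t then (J + 1)%:~R * s else t in
  J%:~R * s <= q <= (J + 1)%:~R * s /\ `|t - q| <= m%:R * s.
Proof.
move=> s0 /andP [h1 h2] hJ q.
have e1 : ((J' - J)%:~R : R) <= m%:R by rewrite -[(m%:R : R)]/((m%:Z)%:~R : R) ler_int; lia.
have e2 : ((J - J')%:~R : R) <= m%:R by rewrite -[(m%:R : R)]/((m%:Z)%:~R : R) ler_int; lia.
rewrite !intrD in h2 *; rewrite intrB in e1; rewrite intrB in e2.
have e1' : (J'%:~R - J%:~R) * s <= m%:R * s by rewrite ler_pM2r.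
have e2' : (J%:~R - J'%:~R) * s <= m%:R * s by rewrite ler_pM2r.
have m0 : 0 <= (m%:R : R) * s by rewrite mulr_ge0 ?ler0n ?ltW.
rewrite /q; case: ifP => ht.
- split; first by apply/andP; split; nra.
  rewrite ler0_norm; nra.
- move/negbT: ht; rewrite -leNgt => ht; case: ifP => ht'.
  + split; first by apply/andP; split; nra.
    rewrite ger0_norm; nra.
  + move/negbT: ht'; rewrite -leNgt => ht'; split; first by apply/andP; split; nra.
    by rewrite subrr normr0.
Qed.

Lemma cube_thick (eps : R) (j j' : 'I_n -> int) (m : nat) : 0 < side n eps ->
  (forall i, `|j' i - j i| <= m%:Z) -> cube eps j' `<=` thick eps (cube eps j) m.
Proof.
move=> s0 H z hz.
exists (\row_i (if z 0 i < (j i)%:~R * side n eps then (j i)%:~R * side n eps else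
           if (j i + 1)%:~R * side n eps < z 0 i then (j i + 1)%:~R * side n eps
           else z 0 i)).
split.
- move=> i; rewrite mxE.
  have [h1 h2] := hz i.
  have [/andP [c1 c2] _] := clampP (side n eps) (z 0 i) (j i) (j' i) m s0
     (introT andP (conj h1 h2)) (H i).
  by split.
- move=> i; rewrite mxE.
  have [h1 h2] := hz i.
  by have [_ c] := clampP (side n eps) (z 0 i) (j i) (j' i) m s0
     (introT andP (conj h1 h2)) (H i).
Qed.

Lemma cubes_meet (eps : R) (j j' : 'I_n -> int) : 0 < side n eps ->
  (forall i, `|j' i - j i| <= 1) -> exists z, cube eps j z /\ cube eps j' z.
Proof.
move=> s0 H.
exists (\row_i ((if j i <= j' i then j' i else j i)%:~R * side n eps)).
split => i; rewrite mxE; have := H i; case: ifP => hl hi; split;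
  rewrite ler_pM2r // ler_int; lia.
Qed.

End Cubes.
Arguments idx {R n}.
Arguments idx_close {R n eps} c y y'.

Section Main.
Variables (R : realType) (n : nat).
Local Open Scope classical_set_scope.
Implicit Types (p q a x y : 'rV[R]_n) (Y X : {fset 'rV[R]_n}).

Lemma jstep (a b : int) (N : nat) : `|b - a| <= N.+1%:Z ->
  `|b - (if a < b then b - 1 else if b < a then b + 1 else b)| <= 1 /\
  `|a - (if a < b then b - 1 else if b < a then b + 1 else b)| <= N%:Z.
Proof.
move=> h; case: ifP => h1; [|case: ifP => h2]; split; lia.
Qed.

Lemma crt_core Y k (eps : R) u v : clos_refl_trans _ (core_edge Y k eps) u v ->
  core_pt Y k eps u -> core_pt Y k eps v.
Proof.
elim => [u' v' [_ [hv _]]|//|u' v' w _ IH1 _ IH2] //.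
by move=> h; apply: IH2; apply: IH1.
Qed.

Lemma comp_core Y k (eps : R) C q : is_component Y k eps C -> C q -> core_pt Y k eps q.
Proof. by move=> [c [cc ->]] /= h; apply: crt_core h cc. Qed.

Lemma comp_closed Y k (eps : R) C u v : is_component Y k eps C -> C u ->
  core_edge Y k eps u v -> C v.
Proof.
move=> [c [cc ->]] /= h e; apply: rt_trans h _; exact: rt_step.
Qed.

Lemma int_lt_nat (d : int) (m : nat) : (d%:~R : R) < m%:R -> d < m%:Z.
Proof. by rewrite -[(m%:R : R)]/((m%:Z)%:~R : R) ltr_int. Qed.

Lemma seg0 p x : seg p x 0 = p.
Proof. by apply/matrixP => i j; rewrite mxE mul0r addr0 (ord1 i). Qed.

Lemma seg1 p x : seg p x 1 = x.
Proof. by apply/matrixP => i j; rewrite mxE mul1r addrC subrK (ord1 i). Qed.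

Lemma self_thick (eps : R) (S : set 'rV[R]_n) m z : 0 < side n eps -> S z -> thick eps S m z.
Proof.
move=> s0 hz; exists z; split => // i; rewrite subrr normr0 mulr_ge0 ?ler0n ?ltW //.
Qed.

Lemma walk X Y k (eps : R) C p x : 0 < side n eps -> is_component Y k eps C -> C p ->
  x \in X -> ~ C x ->
  exists l : R, 0 <= l <= 1 /\
    boundary_cube X eps C (cube eps (idx eps (seg p x l))).
Proof.
move=> s0 hC Cp xX nCx.
set s := side n eps.
set M := (Num.trunc (dist p x / s)).+1.
have M0 : (0 < M%:R :> R) by rewrite ltr0n.
have hM : dist p x / s < M%:R by apply: truncnS_gt.
set yy := fun j : nat => seg p x (j%:R / M%:R).
set B := fun j : nat => cube eps (idx eps (yy j)).
apply: contrapT => Hn.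
have Hnb : forall j, (j <= M)%N -> ~ boundary_cube X eps C (B j).
  move=> j jM hb; apply: Hn; exists (j%:R / M%:R); split => //.
  apply/andP; split; first by rewrite divr_ge0 ?ler0n.
  by rewrite ler_pdivrMr // mul1r ler_nat.
have Hint : forall j, (j <= M)%N -> interior_cube X eps C (B j).
  elim => [|j IH] jM.
    have hI : Icubes eps C (B 0).
      split; first by exists (idx eps (yy 0)).
      exists p; split => //; rewrite /B /yy mul0r seg0; exact: in_cube_idx.
    have [//|ni] := pselect (interior_cube X eps C (B 0)).
    by exfalso; apply: (Hnb 0%N) => //; split.
  have [_ [_ H3]] := IH (ltnW jM).
  have hI : Icubes eps C (B j.+1).
    apply: H3; first by exists (idx eps (yy j.+1)).
    apply: cube_thick => // i.
    have := idx_close 1 (yy j) (yy j.+1) s0 _ i.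
    case.
      move=> i'; rewrite /yy !mxE mul1r.
      have -> : p 0 i' + j.+1%:R / M%:R * (x 0 i' - p 0 i') -
                (p 0 i' + j%:R / M%:R * (x 0 i' - p 0 i')) =
                (x 0 i' - p 0 i') / M%:R.
        rewrite -natr1; field; by rewrite gt_eqF.
      rewrite normrM normfV (gtr0_norm M0) ler_pdivrMr //.
      have := coord_le_dist x p i'; rewrite distC.
      rewrite ltr_pdivrMr // in hM. move=> h. apply: (le_trans h). by rewrite mulrC ltW.
    rewrite (_ : (1 + 1 : R) = 2%:R) // => h1 h2.
    have := int_lt_nat _ _ h1; have := int_lt_nat _ _ h2; lia.
  have [//|ni] := pselect (interior_cube X eps C (B j.+1)).
  by exfalso; apply: (Hnb j.+1) => //; split.
have [_ [H2 _]] := Hint M (leqnn M).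
apply: nCx; apply: H2; split => //.
apply: self_thick => //.
rewrite /B /yy divff ?gt_eqF // seg1; exact: in_cube_idx.
Qed.

Lemma frakn_ge : (0 < n)%N -> Num.sqrt (n%:R : R) <= (frakn R n)%:R + 1.
Proof.
move=> n0.
have s1 : 1 <= Num.sqrt (n%:R : R).
  by rewrite -{1}sqrtr1 ler_sqrt ?ler0n // ler1n.
have z0 : (0 <= Num.ceil (Num.sqrt (n%:R : R) - 1))%R by rewrite ceil_ge0; lra.
have := ceil_ge (Num.sqrt (n%:R : R) - 1).
rewrite /frakn -[((`|_|%N)%:R : R)]/(((`|_|%N : nat)%:Z)%:~R : R) gez0_abs //.
lra.
Qed.

End Main.
Arguments comp_core {R n Y k eps C q}.
Arguments comp_closed {R n Y k eps C u v}.
Arguments walk {R n X Y k eps C p x}.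
Arguments int_lt_nat {R d m}.

Theorem corollary5p5 (R : realType) (n : nat) (X Y : {fset 'rV[R]_n}) (k : nat)
  (eps : R) (C : classical_sets.set 'rV[R]_n) (p x : 'rV[R]_n) :
  (2 <= n)%N -> fsubset Y X -> 0 < eps ->
  is_component Y k eps C -> C p ->
  x \in Y -> ~ C x ->
  exists a, Zthick_in eps (boundary X eps C) (frakn R n) C a /\
            Jset X Y k eps a /\
            rho Y k a x <= rho Y k p x.
Proof.
move=> n2 YX e0 hC Cp xY nCx.
have n0 : (0 < n)%N by apply: leq_trans n2.
have s0 : 0 < side n eps by apply: side_gt0.
have xX : x \in X by apply: (fsubsetP YX).
have pcore : core_pt Y k eps p by apply: (comp_core hC Cp).
have px : p != x by apply/eqP => h; apply: nCx; rewrite -h.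
have key : eps < Num.max (core_dist Y k x) (dist p x).
  rewrite lt_max; apply/orP.
  have [xc|xn] := pselect (core_pt Y k eps x).
    right; rewrite ltNge; apply/negP => h; apply: nCx.
    by apply: (comp_closed hC Cp); split; [|split].
  left; apply: noise_gt => //; first exact: ltW.
  case: pcore => _ hk; apply: leq_trans hk _; apply: fsubset_leq_card.
  by apply/fsubsetP => y; rewrite inE => /andP [].
have [l [/andP [l0 l1] Bnd]] := walk s0 hC Cp xX nCx.
set y := seg p x l in Bnd.
set w := idx eps y in Bnd.
have hy : cube eps w y by apply: in_cube_idx.
have Jfrom : forall a, Zthick_in eps (boundary X eps C) (frakn R n) C a -> Jset X Y k eps a.
  by move=> a h; left; exists C.
have [hI _] := Bnd.
have dpx0 : 0 <= dist p x by apply: dist_ge0.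
case: (leP (side n eps * Num.sqrt n%:R) (dist p y)) => hd.
- case: hI => _ [a [Ba Ca]].
  have Za : Zthick_in eps (boundary X eps C) (frakn R n) C a.
    split; last by [].
    exists (cube eps w); split; last by apply: self_thick.
    split; first by exists w.
    exists a; split => //; exists (cube eps w); split => //.
  exists a; split => //; split; first exact: Jfrom.
  have ax : a != x by apply/eqP => h; apply: nCx; rewrite -h.
  rewrite /rho (negbTE ax) (negbTE px).
  have ca : core_dist Y k a <= eps.
    by apply: core_le; [exact: ltW | exact: (comp_core hC Ca)].
  have dax : dist a x <= dist p x.
    have t := dist_triangle a y x.
    have hb : dist a y <= Num.sqrt n%:R * side n eps.
      apply: dist_le_box; first exact: ltW.
      move=> i; have [a1 a2] := Ba i; have [y1 y2] := hy i.
      rewrite intrD mulrDl mul1r in a2 y2; rewrite ler_norml; apply/andP; split; lra.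
    rewrite dist_seg_r // mulrBl mul1r in t.
    rewrite dist_seg_l // in hd.
    rewrite mulrC in hb; lra.
  apply: le_trans (_ : Num.max (core_dist Y k x) (dist p x) <= _); last first.
    by rewrite le_max lexx orbT.
  rewrite !ge_max; apply/andP; split; first exact: le_trans ca (ltW key).
  apply/andP; split; first by rewrite le_max lexx.
  by rewrite le_max dax orbT.
- exists p.
  set P := idx eps p.
  have hp : cube eps P p by apply: in_cube_idx.
  have hwP : forall i, `|w i - P i| <= (frakn R n).+1%:Z.
    move=> i; have := idx_close ((frakn R n).+1%:R) p y s0 _ i; case.
      move=> i'; apply: le_trans (coord_le_dist y p i') _; rewrite distC.
      apply: ltW; apply: lt_le_trans hd _.
      rewrite mulrC ler_pM2r // -natr1; exact: frakn_ge.
    rewrite natr1 => h1 h2; have := int_lt_nat h1; have := int_lt_nat h2; rewrite /w /P; lia.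
  set j' := fun i => if P i < w i then w i - 1 else if w i < P i then w i + 1 else w i.
  have hj1 : forall i, `|w i - j' i| <= 1.
    by move=> i; have [] := jstep _ _ _ (hwP i).
  have hj2 : forall i, `|P i - j' i| <= (frakn R n)%:Z.
    by move=> i; have [] := jstep _ _ _ (hwP i).
  have Zp : Zthick_in eps (boundary X eps C) (frakn R n) C p.
    split; last by [].
    exists (cube eps j'); split; last by apply: (@cube_thick _ _ _ _ _ _ s0 hj2).
    split; first by exists j'.
    have [z [zj zw]] := @cubes_meet _ _ _ _ _ s0 hj1.
    by exists z; split => //; exists (cube eps w); split.
  split => //; split; first exact: Jfrom.
  exact: lexx.
Qed.
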